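(* Let $\epsilon>0$ be sufficiently small. Consider 4 players where players 3 and 4 have the uniform (Lebesgue) valuation on $[0,1]$; player 1 has a nonatomic valuation giving value $\frac12-\epsilon$ to $(0,\epsilon)$, $3\epsilon$ to $(\frac34,\frac34+3\epsilon)$, $\frac12-2\epsilon$ to $(1-\epsilon,1)$, and $0$ elsewhere; player 2 has a nonatomic valuation giving value $3\epsilon$ to $(\epsilon,2\epsilon)$, $\frac12-2\epsilon$ to $(\frac14-\epsilon,\frac14)$, $\frac12-\epsilon$ to $(\frac12,\frac12+\epsilon)$, and $0$ elsewhere. Then every envy-free complete connected division has egalitarian welfare at most $\frac14+2\epsilon$, while the partial division giving $(0,2\epsilon)$ to player 1, $(2\epsilon,\frac12)$ to player 3, $(\frac12,\frac12+\epsilon)$ to player 2, $(\frac12+\epsilon,1-\epsilon)$ to player 4 (discarding $(1-\epsilon,1)$) is envy-free with every player receiving utility at least $\frac12-2\epsilon$. Hence this instance exhibits an egalitarian $\alpha$-dumping paradox with $\alpha=\frac{2-8\epsilon}{1+8\epsilon}$.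
   Context: A (connected) division for players $1,\dots,n$ of the cake $[0,1]$ is a sequence $(X_1,\dots,X_n)$ of pairwise disjoint open intervals (possibly empty), $X_i$ being player $i$'s piece; it is complete if the union of the closures of the $X_i$ equals $[0,1]$, and partial otherwise. Each player $i$ has a valuation $v_i$, a nonatomic probability measure on $[0,1]$; $u_i(x,j)=v_i(X_j)$. A division is envy-free if $u_i(x,i)\ge u_i(x,j)$ for all $i,j$. Egalitarian welfare: $eg(x)=\min_i u_i(x,i)$. For $\alpha>1$, an instance exhibits an egalitarian $\alpha$-dumping paradox if there is an envy-free partial division $y$ with $eg(y)\ge\alpha\,eg(x)$ for every envy-free complete division $x$. *)

(* Defs.v *)
From Stdlib Require Import Reals Lra.
Open Scope R_scope.

(* A nonatomic probability measure v on [0,1] is represented, as far as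
   its values on intervals are concerned (the only values ever used, since
   pieces are intervals), by its distribution function F:
   v((a,b)) = F b - F a.  Nonatomic <-> F continuous. *)
Definition valuation (F : R -> R) : Prop :=
  (forall x y, x <= y -> F x <= F y) /\
  (forall x, continuity_pt F x) /\
  F 0 = 0 /\ F 1 = 1.

(* Players are indexed 0..n-1 (player k of the paper is index k-1).
   Player i's piece is the open interval (a i, b i), with a i <= b i;
   it is empty iff a i = b i. *)
Definition is_division (n : nat) (a b : nat -> R) : Prop :=
  (forall i, (i < n)%nat -> 0 <= a i /\ a i <= b i /\ b i <= 1) /\
  (forall i j, (i < n)%nat -> (j < n)%nat -> i <> j ->
     a i = b i \/ a j = b j \/ b i <= a j \/ b j <= a i).

Definition complete (n : nat) (a b : nat -> R) : Prop :=
  forall x, 0 <= x <= 1 ->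
    exists i, (i < n)%nat /\ a i < b i /\ a i <= x <= b i.

Definition util (F : nat -> R -> R) (a b : nat -> R) (i j : nat) : R :=
  F i (b j) - F i (a j).

Definition envy_free (n : nat) (F : nat -> R -> R) (a b : nat -> R) : Prop :=
  forall i j, (i < n)%nat -> (j < n)%nat -> util F a b i j <= util F a b i i.

Fixpoint minupto (f : nat -> R) (m : nat) : R :=
  match m with
  | O => f O
  | S k => Rmin (f (S k)) (minupto f k)
  end.

(* egalitarian welfare min_{i<n} u_i(x,i) (for n >= 1) *)
Definition eg (n : nat) (F : nat -> R -> R) (a b : nat -> R) : R :=
  minupto (fun i => util F a b i i) (n - 1).

Definition eg_dumping_paradox (n : nat) (F : nat -> R -> R) (alpha : R) : Prop :=
  1 < alpha /\
  exists a b, is_division n a b /\ ~ complete n a b /\ envy_free n F a b /\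
    forall a' b', is_division n a' b' -> complete n a' b' -> envy_free n F a' b' ->
      eg n F a b >= alpha * eg n F a' b'.

Definition unif (x : R) : R := x.

Definition vals4 (F1 F2 : R -> R) : nat -> R -> R :=
  fun i => match i with O => F1 | 1%nat => F2 | _ => unif end.

Definition ya (eps : R) : nat -> R :=
  fun i => match i with O => 0 | 1%nat => 1/2 | 2%nat => 2*eps | _ => 1/2 + eps end.
Definition yb (eps : R) : nat -> R :=
  fun i => match i with O => 2*eps | 1%nat => 1/2 + eps | 2%nat => 1/2 | _ => 1 - eps end.

(* Main.v *)
Require Import Defs.
From Stdlib Require Import Reals Lra Lia.
Open Scope R_scope.

Lemma eg4 F a b : eg 4 F a b = Rmin (util F a b 3 3) (Rmin (util F a b 2 2)
  (Rmin (util F a b 1 1) (util F a b 0 0))).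
Proof. reflexivity. Qed.

Lemma min4 x0 x1 x2 x3 c : c < Rmin x3 (Rmin x2 (Rmin x1 x0)) ->
  c < x0 /\ c < x1 /\ c < x2 /\ c < x3.
Proof.
  intros H.
  pose proof (Rmin_l x3 (Rmin x2 (Rmin x1 x0))).
  pose proof (Rmin_r x3 (Rmin x2 (Rmin x1 x0))).
  pose proof (Rmin_l x2 (Rmin x1 x0)).
  pose proof (Rmin_r x2 (Rmin x1 x0)).
  pose proof (Rmin_l x1 x0).
  pose proof (Rmin_r x1 x0).
  lra.
Qed.

Ltac fin := repeat match goal with H : _ \/ _ |- _ => destruct H end; lra.

Lemma part1 (eps : R) (F1 F2 : R -> R) a b
 (he : 0 < eps < 1/100)
 (M1 : forall x y, x <= y -> F1 x <= F1 y) (M2 : forall x y, x <= y -> F2 x <= F2 y)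
 (A0 : F1 0 = 0) (A1 : F1 1 = 1) (Ae : F1 eps = 1/2-eps) (A34 : F1 (3/4) = 1/2-eps)
 (A34e : F1 (3/4+3*eps) = 1/2+2*eps) (A1e: F1 (1-eps) = 1/2+2*eps)
 (B0 : F2 0 = 0) (B1: F2 1 = 1) (Be : F2 eps = 0) (B14e: F2 (1/4-eps) = 3*eps)
 (B14 : F2 (1/4) = 1/2+eps) (B12e : F2 (1/2+eps) = 1) :
 is_division 4 a b -> complete 4 a b -> envy_free 4 (vals4 F1 F2) a b ->
 eg 4 (vals4 F1 F2) a b <= 1/4 + 2*eps.
Proof.
  intros [Hb Hd] Hc Hef.
  rewrite eg4. apply Rnot_lt_le; intro Hlt.
  apply min4 in Hlt. destruct Hlt as [U0 [U1 [U2 U3]]].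
  cbv beta iota delta [util vals4 unif] in U0, U1, U2, U3.
  destruct (Hb 0%nat ltac:(lia)) as [a0p [ab0 b0p]].
  destruct (Hb 1%nat ltac:(lia)) as [a1p [ab1 b1p]].
  destruct (Hb 2%nat ltac:(lia)) as [a2p [ab2 b2p]].
  destruct (Hb 3%nat ltac:(lia)) as [a3p [ab3 b3p]].
  assert (ne0 : a 0%nat < b 0%nat).
  { destruct (Rle_lt_or_eq_dec _ _ ab0) as [h|h]; [exact h| rewrite h in U0; lra]. }
  assert (ne1 : a 1%nat < b 1%nat).
  { destruct (Rle_lt_or_eq_dec _ _ ab1) as [h|h]; [exact h| rewrite h in U1; lra]. }
  assert (D01 : b 0%nat <= a 1%nat \/ b 1%nat <= a 0%nat) by
    (destruct (Hd 0%nat 1%nat ltac:(lia) ltac:(lia) ltac:(lia)) as [h|[h|h]]; lra).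
  assert (D02 : b 0%nat <= a 2%nat \/ b 2%nat <= a 0%nat) by
    (destruct (Hd 0%nat 2%nat ltac:(lia) ltac:(lia) ltac:(lia)) as [h|[h|h]]; lra).
  assert (D03 : b 0%nat <= a 3%nat \/ b 3%nat <= a 0%nat) by
    (destruct (Hd 0%nat 3%nat ltac:(lia) ltac:(lia) ltac:(lia)) as [h|[h|h]]; lra).
  assert (D12 : b 1%nat <= a 2%nat \/ b 2%nat <= a 1%nat) by
    (destruct (Hd 1%nat 2%nat ltac:(lia) ltac:(lia) ltac:(lia)) as [h|[h|h]]; lra).
  assert (D13 : b 1%nat <= a 3%nat \/ b 3%nat <= a 1%nat) by
    (destruct (Hd 1%nat 3%nat ltac:(lia) ltac:(lia) ltac:(lia)) as [h|[h|h]]; lra).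
  assert (D23 : b 2%nat <= a 3%nat \/ b 3%nat <= a 2%nat) by
    (destruct (Hd 2%nat 3%nat ltac:(lia) ltac:(lia) ltac:(lia)) as [h|[h|h]]; lra).
  clear Hd.
  pose proof (Hef 0%nat 1%nat ltac:(lia) ltac:(lia)) as E01.
  pose proof (Hef 0%nat 2%nat ltac:(lia) ltac:(lia)) as E02.
  pose proof (Hef 0%nat 3%nat ltac:(lia) ltac:(lia)) as E03.
  pose proof (Hef 1%nat 2%nat ltac:(lia) ltac:(lia)) as E12.
  pose proof (Hef 1%nat 3%nat ltac:(lia) ltac:(lia)) as E13.
  cbv beta iota delta [util vals4 unif] in E01, E02, E03, E12, E13.
  destruct (Rle_lt_dec (b 0%nat) (3/4)) as [c1|c1].
  - assert (F1 (b 0%nat) <= F1 (3/4)) by (apply M1; lra).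
    assert (F1 0 <= F1 (a 0%nat)) by (apply M1; lra).
    destruct (Hc 1 ltac:(lra)) as [i [Hi [Hai Hx]]].
    assert (Hbi1 : b i = 1) by (destruct (Hb i Hi); lra).
    destruct i as [|[|[|[|i]]]]; [lra | | | | lia].
    + destruct (Rle_lt_dec (a 1%nat) (3/4)).
      * assert (F1 (a 1%nat) <= F1 (3/4)) by (apply M1; lra). rewrite Hbi1 in E01. lra.
      * assert (F2 (1/2+eps) <= F2 (a 1%nat)) by (apply M2; lra). rewrite Hbi1 in U1. lra.
    + destruct (Rle_lt_dec (a 2%nat) (3/4)).
      * assert (F1 (a 2%nat) <= F1 (3/4)) by (apply M1; lra). rewrite Hbi1 in E02. lra.
      * lra.
    + destruct (Rle_lt_dec (a 3%nat) (3/4)).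
      * assert (F1 (a 3%nat) <= F1 (3/4)) by (apply M1; lra). rewrite Hbi1 in E03. lra.
      * lra.
  - destruct (Rlt_le_dec (a 0%nat) eps) as [c2|c2].
    + fin.
    + assert (F1 eps <= F1 (a 0%nat)) by (apply M1; lra).
      assert (F1 (b 0%nat) <= F1 1) by (apply M1; lra).
      assert (hb0 : b 0%nat > 1 - eps).
      { destruct (Rle_lt_dec (b 0%nat) (1-eps)); [|lra].
        assert (F1 (b 0%nat) <= F1 (1-eps)) by (apply M1; lra). lra. }
      destruct (Hc 0 ltac:(lra)) as [i [Hi [Hai Hx]]].
      assert (Hai0 : a i = 0) by (destruct (Hb i Hi); lra).
      destruct i as [|[|[|[|i]]]]; [lra | | | | lia].
      * rewrite Hai0 in U1, E01.
        destruct (Rlt_le_dec (b 1%nat) (1/4-eps)).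
        -- assert (F2 (b 1%nat) <= F2 (1/4-eps)) by (apply M2; lra). lra.
        -- assert (F1 eps <= F1 (b 1%nat)) by (apply M1; lra).
           destruct (Rle_lt_dec (3/4+3*eps) (a 0%nat)).
           ++ assert (F1 (3/4+3*eps) <= F1 (a 0%nat)) by (apply M1; lra). lra.
           ++ fin.
      * assert (b 2%nat <= a 1%nat) by (destruct D12; lra).
        assert (F2 (1/4) <= F2 (b 2%nat)) by (apply M2; lra).
        assert (F2 (1/4) <= F2 (a 1%nat)) by (apply M2; lra).
        assert (F2 (b 1%nat) <= F2 1) by (apply M2; lra).
        rewrite Hai0 in E12. lra.
      * assert (b 3%nat <= a 1%nat) by (destruct D13; lra).
        assert (F2 (1/4) <= F2 (b 3%nat)) by (apply M2; lra).
        assert (F2 (1/4) <= F2 (a 1%nat)) by (apply M2; lra).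
        assert (F2 (b 1%nat) <= F2 1) by (apply M2; lra).
        rewrite Hai0 in E13. lra.
Qed.

Theorem mainTheorem10 :
  exists eps0, 0 < eps0 /\
  forall eps, 0 < eps < eps0 ->
  forall F1 F2 : R -> R,
    valuation F1 -> valuation F2 ->
    F1 eps - F1 0 = 1/2 - eps ->
    F1 (3/4 + 3*eps) - F1 (3/4) = 3*eps ->
    F1 1 - F1 (1 - eps) = 1/2 - 2*eps ->
    F2 (2*eps) - F2 eps = 3*eps ->
    F2 (1/4) - F2 (1/4 - eps) = 1/2 - 2*eps ->
    F2 (1/2 + eps) - F2 (1/2) = 1/2 - eps ->
    (forall a b, is_division 4 a b -> complete 4 a b ->
       envy_free 4 (vals4 F1 F2) a b -> eg 4 (vals4 F1 F2) a b <= 1/4 + 2*eps) /\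
    (is_division 4 (ya eps) (yb eps) /\ ~ complete 4 (ya eps) (yb eps) /\
     envy_free 4 (vals4 F1 F2) (ya eps) (yb eps) /\
     (forall i, (i < 4)%nat ->
        util (vals4 F1 F2) (ya eps) (yb eps) i i >= 1/2 - 2*eps)) /\
    eg_dumping_paradox 4 (vals4 F1 F2) ((2 - 8*eps) / (1 + 8*eps)).
Proof.
  exists (1/100). split; [lra|].
  intros eps he F1 F2 [M1 [_ [F10 F11]]] [M2 [_ [F20 F21]]] h1 h2 h3 h4 h5 h6.
  assert (F1 eps <= F1 (3/4)) by (apply M1; lra).
  assert (F1 (3/4+3*eps) <= F1 (1-eps)) by (apply M1; lra).
  assert (Ae : F1 eps = 1/2-eps) by lra.
  assert (A34 : F1 (3/4) = 1/2-eps) by lra.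
  assert (A34e : F1 (3/4+3*eps) = 1/2+2*eps) by lra.
  assert (A1e : F1 (1-eps) = 1/2+2*eps) by lra.
  assert (F2 0 <= F2 eps) by (apply M2; lra).
  assert (F2 (2*eps) <= F2 (1/4-eps)) by (apply M2; lra).
  assert (F2 (1/4) <= F2 (1/2)) by (apply M2; lra).
  assert (F2 (1/2+eps) <= F2 1) by (apply M2; lra).
  assert (Be : F2 eps = 0) by lra.
  assert (B2e : F2 (2*eps) = 3*eps) by lra.
  assert (B14e : F2 (1/4-eps) = 3*eps) by lra.
  assert (B14 : F2 (1/4) = 1/2+eps) by lra.
  assert (B12 : F2 (1/2) = 1/2+eps) by lra.
  assert (B12e : F2 (1/2+eps) = 1) by lra.
  assert (F2 (1/2+eps) <= F2 (1-eps)) by (apply M2; lra).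
  assert (F2 (1-eps) <= F2 1) by (apply M2; lra).
  assert (B1e : F2 (1-eps) = 1) by lra.
  assert (F1 eps <= F1 (2*eps)) by (apply M1; lra).
  assert (F1 (2*eps) <= F1 (3/4)) by (apply M1; lra).
  assert (F1 eps <= F1 (1/2)) by (apply M1; lra).
  assert (F1 (1/2) <= F1 (3/4)) by (apply M1; lra).
  assert (F1 eps <= F1 (1/2+eps)) by (apply M1; lra).
  assert (F1 (1/2+eps) <= F1 (3/4)) by (apply M1; lra).
  assert (he' : 0 < eps < 1/100) by lra.
  assert (P1 : forall a b, is_division 4 a b -> complete 4 a b ->
       envy_free 4 (vals4 F1 F2) a b -> eg 4 (vals4 F1 F2) a b <= 1/4 + 2*eps).
  { intros a b. apply part1; auto; lra. }
  assert (Q1 : is_division 4 (ya eps) (yb eps)).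
  { split.
    - intros i Hi. destruct i as [|[|[|[|i]]]]; try lia;
      cbv beta iota delta [ya yb]; lra.
    - intros i j Hi Hj Hij.
      destruct i as [|[|[|[|i]]]]; destruct j as [|[|[|[|j]]]]; try lia;
      cbv beta iota delta [ya yb];
      first [right; right; left; lra | right; right; right; lra]. }
  assert (Q2 : ~ complete 4 (ya eps) (yb eps)).
  { intro Hc. destruct (Hc 1 ltac:(lra)) as [i [Hi [Hq1 Hq2]]].
    destruct i as [|[|[|[|i]]]]; try lia; cbv beta iota delta [ya yb] in *; lra. }
  assert (Q3 : envy_free 4 (vals4 F1 F2) (ya eps) (yb eps)).
  { intros i j Hi Hj.
    destruct i as [|[|[|[|i]]]]; destruct j as [|[|[|[|j]]]]; try lia;
    cbv beta iota delta [util vals4 unif ya yb]; lra. }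
  assert (Q4 : forall i, (i < 4)%nat ->
        util (vals4 F1 F2) (ya eps) (yb eps) i i >= 1/2 - 2*eps).
  { intros i Hi. destruct i as [|[|[|[|i]]]]; try lia;
    cbv beta iota delta [util vals4 unif ya yb]; lra. }
  split; [exact P1|]. split; [tauto|].
  set (alpha := (2 - 8*eps) / (1 + 8*eps)).
  assert (Hal : 1 < alpha).
  { unfold alpha, Rdiv. apply Rmult_lt_reg_r with (1+8*eps). lra.
    rewrite Rmult_assoc, Rinv_l by lra. lra. }
  assert (Hal2 : alpha * (1/4 + 2*eps) = 1/2 - 2*eps) by (unfold alpha; field; lra).
  split; [exact Hal|].
  exists (ya eps), (yb eps). split; [exact Q1|]. split; [exact Q2|]. split; [exact Q3|].
  intros a' b' Hd Hc Hef.
  pose proof (P1 a' b' Hd Hc Hef) as Hle.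
  assert (alpha * eg 4 (vals4 F1 F2) a' b' <= alpha * (1/4 + 2*eps))
    by (apply Rmult_le_compat_l; lra).
  assert (eg 4 (vals4 F1 F2) (ya eps) (yb eps) >= 1/2 - 2*eps).
  { rewrite eg4.
    pose proof (Q4 0%nat ltac:(lia)). pose proof (Q4 1%nat ltac:(lia)).
    pose proof (Q4 2%nat ltac:(lia)). pose proof (Q4 3%nat ltac:(lia)).
    apply Rle_ge. repeat apply Rmin_glb; lra. }
  lra.
Qed.
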